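(* Let $\delta,\delta^\perp$ be positive integers and define $$L_1=\{N\in\Delta(s_1,\dots,s_m)\mid D(N)\ge\delta\},\qquad L_2=\{N\in\Delta(s_1,\dots,s_m)\mid D^\perp(N)<\delta^\perp\}.$$ Suppose $L_2\subsetneq L_1$. Then $C(L_2)\subsetneq C(L_1)$ have codimension $\ell=\#L_1-\#L_2$, and $$M_1(C(L_1),C(L_2))\ge\delta,\qquad M_1(C(L_2)^\perp,C(L_1)^\perp)\ge\delta^\perp.$$
   Context: $q$ is a prime power. For $i=1,\dots,m$, $S_i\subseteq\mathbb{F}_q$ is nonempty with $s_i=\#S_i$; $S=S_1\times\cdots\times S_m=\{\alpha_1,\dots,\alpha_n\}$, $n=\prod_i s_i$. $\Delta(s_1,\dots,s_m)=\{X_1^{i_1}\cdots X_m^{i_m}\mid 0\le i_t<s_t\}$. For $L\subseteq\Delta(s_1,\dots,s_m)$, $C(L)\subseteq\mathbb{F}_q^n$ is the span of $(N(\alpha_1),\dots,N(\alpha_n))$, $N\in L$. For $N=X_1^{i_1}\cdots X_m^{i_m}$: $D(N)=\prod_t(s_t-i_t)$, $D^\perp(N)=\prod_t(i_t+1)$. $C^\perp$ is the Euclidean dual. For linear codes $C_2\subsetneq C_1$, $M_1(C_1,C_2)=\min\{w_H(\vec c)\mid\vec c\in C_1\setminus C_2\}$ (Hamming weight). *)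

(* Defs.v *)
From HB Require Import structures.
From mathcomp Require Import all_boot all_order all_algebra all_field.
Set Implicit Arguments. Unset Strict Implicit. Unset Printing Implicit Defensive.
Import GRing.Theory.
Local Open Scope ring_scope.

Section Codes.
Variables (F : finFieldType) (m : nat) (S : 'I_m -> {set F}).

Definition grid : {set {ffun 'I_m -> F}} :=
  [set x : {ffun 'I_m -> F} | [forall t, x t \in S t]].

(* n = #S = prod s_i; the points alpha_1..alpha_n are enum_val of grid. *)
Definition npts : nat := #|grid|.

(* Monomial X_1^{i_1}...X_m^{i_m} encoded by its exponent vector; since
   i_t < s_t <= q = #|F|, exponents live in 'I_#|F|. *)
Definition monom := {ffun 'I_m -> 'I_#|F|}.

Definition Delta : {set monom} :=
  [set e : monom | [forall t, (e t < #|S t|)%N]].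

Definition Dw (e : monom) : nat := (\prod_(t < m) (#|S t| - e t))%N.
Definition Dperp (e : monom) : nat := (\prod_(t < m) (e t + 1))%N.

Definition evalvec (e : monom) : 'rV[F]_npts :=
  \row_(j < npts) \prod_(t < m) ((enum_val j : {ffun 'I_m -> F}) t) ^+ (e t).

(* generator matrix of C(L): its row space is C(L) *)
Definition codeM (L : {set monom}) : 'M[F]_(#|L|, npts) :=
  \matrix_(k < #|L|) evalvec (enum_val k).

End Codes.

(* Euclidean dual: row space of kermx C^T = { u | u *m C^T = 0 }. *)
Definition dualM (F : fieldType) (r n : nat) (C : 'M[F]_(r, n)) : 'M[F]_n :=
  kermx C^T.

Definition hwt (F : fieldType) (n : nat) (u : 'rV[F]_n) : nat :=
  #|[set j : 'I_n | u 0 j != 0]|.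

(* M_1(C1,C2) = min weight over C1 \ C2 (codes = row spaces);
   default value n if C1 \ C2 is empty. *)
Definition M1 (F : finFieldType) (r1 r2 n : nat)
  (C1 : 'M[F]_(r1, n)) (C2 : 'M[F]_(r2, n)) : nat :=
  \big[minn/n]_(u : 'rV[F]_n | (u <= C1)%MS && ~~ (u <= C2)%MS) hwt u.

(* Main.v *)
Require Import Defs.
From HB Require Import structures.
From mathcomp Require Import all_boot all_order all_algebra all_field.
Set Implicit Arguments. Unset Strict Implicit. Unset Printing Implicit Defensive.
Import GRing.Theory.
Local Open Scope ring_scope.


Section Aux.
Variables (F : finFieldType) (m : nat).
Local Notation pt := {ffun 'I_m -> F}.
Local Notation mon := (monom F m).

Definition upd (U : Type) (f : {ffun 'I_m -> U}) (t0 : 'I_m) (a : U) : {ffun 'I_m -> U} :=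
  [ffun t => if t == t0 then a else f t].

Lemma upd_eq U (f : {ffun 'I_m -> U}) t0 a : upd f t0 a t0 = a.
Proof. by rewrite ffunE eqxx. Qed.
Lemma upd_neq U (f : {ffun 'I_m -> U}) t0 a t : t != t0 -> upd f t0 a t = f t.
Proof. by rewrite ffunE => /negbTE ->. Qed.
Lemma upd_upd U (f : {ffun 'I_m -> U}) t0 a b : upd (upd f t0 a) t0 b = upd f t0 b.
Proof. by apply/ffunP => t; rewrite !ffunE; case: eqP. Qed.
Lemma upd_id U (f : {ffun 'I_m -> U}) t0 : upd f t0 (f t0) = f.
Proof. by apply/ffunP => t; rewrite !ffunE; case: eqP => // ->. Qed.

Lemma big_split_coord (U : finType) (R : Type) (idx : R) (op : Monoid.com_law idx)
  (t0 : 'I_m) (u0 : U) (P : pred {ffun 'I_m -> U}) (G : {ffun 'I_m -> U} -> R) :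
  \big[op/idx]_(x | P x) G x =
  \big[op/idx]_(a : U) \big[op/idx]_(x : {ffun 'I_m -> U} | (x t0 == u0) && P (upd x t0 a)) G (upd x t0 a).
Proof.
rewrite (partition_big (fun x : {ffun 'I_m -> U} => x t0) predT) //=.
apply: eq_bigr => a _.
rewrite (reindex_onto (fun x => upd x t0 a) (fun x => upd x t0 u0)); last first.
  by move=> x /andP[_ /eqP <-]; rewrite upd_upd upd_id.
apply: eq_bigl => x; rewrite upd_upd upd_eq eqxx andbT.
rewrite andbC; congr (_ && _).
by apply/eqP/eqP => [<-|<-]; [rewrite upd_eq | rewrite upd_id].
Qed.

Definition mono (e : mon) (x : pt) : F := \prod_(t < m) x t ^+ e t.
Definition ev (c : mon -> F) (x : pt) : F := \sum_(e : mon) c e * mono e x.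
Definition wt (S : 'I_m -> {set F}) (f : pt -> F) : nat := #|[set x in grid S | f x != 0]|.
Definition ip (S : 'I_m -> {set F}) (u : pt -> F) (e : mon) : F :=
  \sum_(x in grid S) u x * mono e x.

Lemma wtE (S : 'I_m -> {set F}) f : wt S f = (\sum_(x in grid S) (f x != 0%R))%N.
Proof.
rewrite /wt -sum1_card big_mkcond /= [RHS]big_mkcond /=.
by apply: eq_bigr => x _; rewrite inE; case: (x \in grid S); case: (f x != 0).
Qed.

Lemma mono_upd (e : mon) (x : pt) t0 k a : (e t0 = 0%N :> nat) ->
  mono (upd e t0 k) (upd x t0 a) = a ^+ k * mono e x.
Proof.
move=> e0; rewrite /mono (bigD1 t0) //= [in RHS](bigD1 t0) //= e0 expr0 mul1r !upd_eq.
congr (_ * _); apply: eq_bigr => t tt0; by rewrite !upd_neq.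
Qed.

Definition Sup (S : 'I_m -> {set F}) t0 a0 : 'I_m -> {set F} :=
  fun t => if t == t0 then [set a0] else S t.

Lemma grid_upd (S : 'I_m -> {set F}) t0 a0 (x : pt) a : a0 \in S t0 ->
  (x t0 == a0) && (upd x t0 a \in grid S) = (a \in S t0) && (x \in grid (Sup S t0 a0)).
Proof.
move=> Ha0; rewrite /grid !inE.
apply/andP/andP => [[/eqP x0 /forallP H]|[Ha /forallP H]].
  split; first by have := H t0; rewrite upd_eq.
  apply/forallP => t; rewrite /Sup; case: eqP => [->|/eqP tt0]; first by rewrite x0 inE.
  by have := H t; rewrite upd_neq.
split; first by have := H t0; rewrite /Sup eqxx inE.
apply/forallP => t; case: (t =P t0) => [->|/eqP tt0]; first by rewrite upd_eq.
by rewrite upd_neq //; have := H t; rewrite /Sup (negbTE tt0).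
Qed.

Lemma sum_grid (R : Type) (idx : R) (op : Monoid.com_law idx) (S : 'I_m -> {set F}) t0 a0 (G : pt -> R) :
  a0 \in S t0 ->
  \big[op/idx]_(x in grid S) G x =
  \big[op/idx]_(a in S t0) \big[op/idx]_(x in grid (Sup S t0 a0)) G (upd x t0 a).
Proof.
move=> Ha0; rewrite (big_split_coord _ t0 a0) [RHS]big_mkcond /=.
apply: eq_bigr => a _.
under eq_bigl => x do rewrite grid_upd //.
by case: (a \in S t0) => //; rewrite big_pred0.
Qed.

End Aux.


Section Univ.
Variable F : finFieldType.

Lemma roots_count (A : {set F}) (p : {poly F}) K : p != 0 -> (size p <= K.+1)%N ->
  (#|A| - K <= #|[set a in A | p.[a] != 0%R]|)%N.
Proof.
move=> p0 sp.
have Hr : (#|[set a in A | root p a]| <= K)%N.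
  rewrite cardE -ltnS; apply: leq_trans sp.
  apply: max_poly_roots => //; last exact: enum_uniq.
  by apply/allP => a; rewrite mem_enum inE => /andP[].
have <- : (#|A :&: [set a | root p a]| + #|A :\: [set a | root p a]| = #|A|)%N
  by apply: cardsID.
have -> : A :&: [set a | root p a] = [set a in A | root p a].
  by apply/setP => a; rewrite !inE.
have -> : A :\: [set a | root p a] = [set a in A | p.[a] != 0].
  by apply/setP => a; rewrite !inE andbC.
by rewrite leq_subLR leq_add2r.
Qed.

Lemma vand (A : {set F}) (v : F -> F) k :
  (forall j, (j < k)%N -> \sum_(a in A) v a * a ^+ j = 0) ->
  (#|[set a in A | v a != 0%R]| <= k)%N -> forall a, a \in A -> v a = 0.
Proof.
move=> Hj Hc b0 Hb0; apply/eqP; apply/negPn/negP => Hv.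
set B := [set a in A | v a != 0] :\ b0.
pose p := \prod_(b <- enum B) ('X - b%:P).
have sp : (size p <= k)%N.
  rewrite size_prod_XsubC -cardE; apply: leq_trans Hc.
  rewrite /B (cardsD1 b0 [set a in A | v a != 0]).
  by rewrite !inE Hb0 Hv.
have H0 : \sum_(a in A) v a * p.[a] = 0.
  under eq_bigr do rewrite horner_coef big_distrr.
  rewrite exchange_big /= big1 // => j _.
  have -> : \sum_(a in A) v a * (p`_j * a ^+ j) = p`_j * \sum_(a in A) v a * a ^+ j.
    by rewrite big_distrr; apply: eq_bigr => a _; rewrite mulrCA.
  by rewrite Hj ?mulr0 // (leq_trans (ltn_ord j) sp).
move: H0; rewrite (bigD1 b0) //= big1 ?addr0.
  move/eqP; rewrite mulf_eq0 (negbTE Hv) /= /p horner_prod.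
  rewrite prodf_seq_eq0 => /hasP[b]; rewrite mem_enum /B !inE hornerXsubC subr_eq0.
  by move=> /and3P[bb0 _ _]; rewrite eq_sym (negbTE bb0).
move=> a /andP[aA ab0]; have [va0|va0] := eqVneq (v a) 0; first by rewrite va0 mul0r.
rewrite /p horner_prod; apply/eqP; rewrite mulf_eq0 prodf_seq_eq0; apply/orP; right.
apply/hasP; exists a; first by rewrite mem_enum !inE ab0 aA va0.
by rewrite hornerXsubC subrr eqxx.
Qed.

End Univ.


Section Primal.
Variables (F : finFieldType) (m : nat).
Local Notation pt := {ffun 'I_m -> F}.
Local Notation mon := (monom F m).

Lemma cardF_gt0 : (0 < #|F|)%N.
Proof. by apply/card_gt0P; exists 0. Qed.
Definition zF : 'I_#|F| := Ordinal cardF_gt0.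

Definition ck (c : mon -> F) (t0 : 'I_m) (k : 'I_#|F|) (e : mon) : F :=
  if e t0 == zF then c (upd e t0 k) else 0.

Lemma ev_decomp (c : mon -> F) t0 (x : pt) a :
  ev c (upd x t0 a) = \sum_(k : 'I_#|F|) ev (ck c t0 k) x * a ^+ k.
Proof.
rewrite /ev (big_split_coord _ t0 zF). apply: (@eq_bigr _ _ _ (ordinal #|F|)) => k _.
rewrite mulr_suml big_mkcond; apply: (@eq_bigr _ _ _ mon) => e _.
rewrite andbT /ck; case: eqP => [e0|_]; last by rewrite !mul0r.
rewrite mono_upd; last by rewrite e0.
by rewrite [RHS]mulrAC -mulrA.
Qed.

Lemma grid_pick (S : 'I_m -> {set F}) : (forall t, S t != set0) ->
  [ffun t => odflt 0 [pick a in S t]] \in grid S.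
Proof.
move=> HS; rewrite inE; apply/forallP => t; rewrite ffunE.
case: pickP => //= H; have /set0Pn[a Ha] := HS t; by have := H a; rewrite Ha.
Qed.

Lemma sumS_lt (S : 'I_m -> {set F}) t0 a0 : (1 < #|S t0|)%N ->
  (\sum_t #|Sup S t0 a0 t| < \sum_t #|S t|)%N.
Proof.
move=> H; rewrite (bigD1 t0) //= [X in (_ < X)%N](bigD1 t0) //= /Sup eqxx cards1.
have -> : (\sum_(i < m | i != t0) #|(if i == t0 then [set a0] else S i)| = \sum_(i < m | i != t0) #|S i|)%N.
  by apply: eq_bigr => i /negbTE ->.
by rewrite ltn_add2r.
Qed.

Lemma primal_base (S : 'I_m -> {set F}) : (forall t, S t != set0) ->
  (forall t, ~~ (1 < #|S t|)%N) ->
  forall c : mon -> F, (forall e, c e != 0 -> e \in Delta S) -> (exists e, c e != 0) ->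
  exists2 e, c e != 0 & (Dw S e <= wt S (ev c))%N.
Proof.
move=> HS H1 c Hc [e1 ce1]; exists e1 => //.
have zero e : c e != 0 -> forall t, e t = 0%N :> nat.
  move=> /Hc; rewrite inE => /forallP He t; apply/eqP; rewrite -leqn0 -ltnS.
  by apply: leq_trans (He t) _; rewrite leqNgt H1.
have Dle : (Dw S e1 <= 1)%N.
  rewrite /Dw; apply: (big_ind (fun x => x <= 1)%N) => // [x y hx hy|t _].
    by rewrite -[1%N]/(1 * 1)%N leq_mul.
  by apply: leq_trans (leq_subr _ _) _; rewrite leqNgt H1.
apply: leq_trans Dle _; rewrite /wt; apply/card_gt0P.
exists [ffun t => odflt 0 [pick a in S t]]; rewrite inE grid_pick //=.
rewrite /ev (bigD1 e1) //= big1 ?addr0.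
  rewrite /mono big1 ?mulr1 // => t _; by rewrite (zero e1 ce1 t) expr0.
move=> e ee1; have [->|ce] := eqVneq (c e) 0; first by rewrite mul0r.
case/eqP: ee1; apply/ffunP => t; apply: val_inj; by rewrite /= (zero e ce t) (zero e1 ce1 t).
Qed.

End Primal.

Section Primal2.
Variables (F : finFieldType) (m : nat).
Local Notation pt := {ffun 'I_m -> F}.
Local Notation mon := (monom F m).

Lemma sum_bool_card (T : finType) (A : {pred T}) (P : pred T) :
  (\sum_(a in A) (P a : nat))%N = #|[set a in A | P a]|.
Proof.
rewrite -sum1_card [RHS]big_mkcond [LHS]big_mkcond /=; apply: eq_bigr => a _.
by rewrite inE; case: (a \in A); case: (P a).
Qed.

Lemma card_le_sum (S : 'I_m -> {set F}) t : (#|S t| <= \sum_t #|S t|)%N.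
Proof. by rewrite (bigD1 t) //= leq_addr. Qed.

Lemma Sup_ne0 (S : 'I_m -> {set F}) t0 a0 : (forall t, S t != set0) ->
  forall t, Sup S t0 a0 t != set0.
Proof.
move=> HS t; rewrite /Sup; case: (t =P t0) => _ //; by rewrite -card_gt0 cards1.
Qed.

Lemma primal_key n : forall S : 'I_m -> {set F}, (\sum_t #|S t| <= n)%N ->
  (forall t, S t != set0) ->
  forall c : mon -> F, (forall e, c e != 0 -> e \in Delta S) -> (exists e, c e != 0) ->
  exists2 e, c e != 0 & (Dw S e <= wt S (ev c))%N.
Proof.
elim: n => [|n IH] S Hsum HS c Hc Hex.
  apply: primal_base => // t; apply/negP => H.
  by have := leq_trans H (leq_trans (card_le_sum S t) Hsum).
case: (boolP [exists t, 1 < #|S t|]%N) => [/existsP[t0 Ht0]|/existsPn H1];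
  last by apply: primal_base.
have /set0Pn[a0 Ha0] := HS t0.
set S' := Sup S t0 a0.
have HS' := Sup_ne0 t0 a0 HS.
have Hsum' : (\sum_t #|S' t| <= n)%N.
  by rewrite -ltnS; apply: leq_trans Hsum; apply: sumS_lt.
case: Hex => eW ceW.
case: (@arg_maxnP _ eW (fun e : mon => c e != 0) (fun e : mon => (e t0 : nat)) ceW) => eK ceK maxK.
set K := eK t0.
have supK e (k : 'I_#|F|) : c (upd e t0 k) != 0 -> (k <= K)%N.
  by move/maxK; rewrite upd_eq.
have Hsup : forall e, ck c t0 K e != 0 -> e \in Delta S'.
  move=> e; rewrite /ck; case: (e t0 =P (zF F)) => [e0 /Hc|]; last by rewrite eqxx.
  rewrite !inE => /forallP He.
  apply/forallP => t; rewrite /S' /Sup; case: (t =P t0) => [->|/eqP tt0].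
    by rewrite e0 cards1.
  by have := He t; rewrite upd_neq.
have Hne : exists e, ck c t0 K e != 0.
  by exists (upd eK t0 (zF F)); rewrite /ck upd_eq eqxx upd_upd upd_id.
have [e' ce' De'] := IH S' Hsum' HS' (ck c t0 K) Hsup Hne.
move: ce'; rewrite /ck; case: (e' t0 =P (zF F)) => [e0 ce|_]; last by rewrite eqxx.
exists (upd e' t0 K) => //.
have DwE : (Dw S (upd e' t0 K) = (#|S t0| - K) * Dw S' e')%N.
  rewrite /Dw (bigD1 t0) //= [X in _ = (_ * X)%N](bigD1 t0) //= /S' /Sup eqxx cards1 e0 /=.
  rewrite subn0 mul1n upd_eq; congr (_ * _)%N; apply: eq_bigr => t tt0.
  by rewrite upd_neq // (negbTE tt0).
rewrite DwE; apply: leq_trans (leq_mul (leqnn _) De') _.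
rewrite !wtE (sum_grid _ _ Ha0) exchange_big big_distrr /=; apply: leq_sum => x' Hx'.
case: eqP => [_|/eqP EK]; first by rewrite muln0.
rewrite muln1.
pose p := \poly_(i < #|F|) ev (ck c t0 (insubd (zF F) i)) x'.
have pE a : p.[a] = ev c (upd x' t0 a).
  by rewrite horner_poly ev_decomp; apply: eq_bigr => k _; rewrite valKd.
have p0 : p != 0.
  apply/eqP => /(congr1 (fun q : {poly F} => q`_K)); rewrite coef_poly ltn_ord valKd coef0.
  by move/eqP; rewrite (negbTE EK).
have sp : (size p <= K.+1)%N.
  apply/leq_sizeP => j hj; rewrite coef_poly; case: ifP => // jF.
  rewrite /ev big1 // => e _; rewrite /ck; case: eqP => _; last by rewrite mul0r.
  have [->|ce2] := eqVneq (c (upd e t0 (insubd (zF F) j))) 0; first by rewrite mul0r.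
  have := supK _ _ ce2; rewrite val_insubd jF => hjK.
  by have := leq_trans hj hjK; rewrite ltnn.
have := roots_count (S t0) p0 sp.
rewrite sum_bool_card.
have -> : [set a in S t0 | p.[a] != 0] = [set a in S t0 | ev c (upd x' t0 a) != 0].
  by apply/setP => a; rewrite !inE pE.
by [].
Qed.

End Primal2.


Section Dual.
Variables (F : finFieldType) (m : nat).
Local Notation pt := {ffun 'I_m -> F}.
Local Notation mon := (monom F m).

Lemma dual_base (S : 'I_m -> {set F}) : (forall t, S t != set0) ->
  (forall t, ~~ (1 < #|S t|)%N) ->
  forall u : pt -> F, (exists2 x, x \in grid S & u x != 0) ->
  exists e, [/\ e \in Delta S, ip S u e != 0 & (Dperp e <= wt S u)%N].
Proof.
move=> HS H1 u [x xG ux].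
have uniq1 y : y \in grid S -> y = x.
  move: xG; rewrite !inE => /forallP Hx /forallP Hy; apply/ffunP => t.
  have : (#|S t| <= 1)%N by rewrite leqNgt H1.
  by move/card_le1_eqP; apply.
exists [ffun _ => zF F]; split.
- rewrite inE; apply/forallP => t; rewrite ffunE /=; by rewrite card_gt0 HS.
- rewrite /ip (bigD1 x) //= big1 ?addr0.
    rewrite /mono big1 ?mulr1 // => t _; by rewrite ffunE expr0.
  by move=> y /andP[yG yx]; rewrite (uniq1 y yG) eqxx in yx.
- rewrite /Dperp big1 => [|t _]; last by rewrite ffunE.
  by rewrite /wt; apply/card_gt0P; exists x; rewrite inE xG.
Qed.

Definition uk (S : 'I_m -> {set F}) t0 (u : pt -> F) (k : nat) (x : pt) : F :=
  \sum_(a in S t0) u (upd x t0 a) * a ^+ k.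

Lemma dual_key n : forall S : 'I_m -> {set F}, (\sum_t #|S t| <= n)%N ->
  (forall t, S t != set0) ->
  forall u : pt -> F, (exists2 x, x \in grid S & u x != 0) ->
  exists e, [/\ e \in Delta S, ip S u e != 0 & (Dperp e <= wt S u)%N].
Proof.
elim: n => [|n IH] S Hsum HS u Hex.
  apply: dual_base => // t; apply/negP => H.
  by have := leq_trans H (leq_trans (card_le_sum S t) Hsum).
case: (boolP [exists t, 1 < #|S t|]%N) => [/existsP[t0 Ht0]|/existsPn H1];
  last by apply: dual_base.
have /set0Pn[a0 Ha0] := HS t0.
set S' := Sup S t0 a0.
have HS' := Sup_ne0 t0 a0 HS.
have Hsum' : (\sum_t #|S' t| <= n)%N.
  by rewrite -ltnS; apply: leq_trans Hsum; apply: sumS_lt.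
have gridS' x' a : x' \in grid S' -> a \in S t0 -> upd x' t0 a \in grid S.
  move=> x'G aS; have := grid_upd x' a Ha0; rewrite aS x'G /=.
  by move/andP=> [].
pose P k := [exists x', (x' \in grid S') && (uk S t0 u k x' != 0)].
have [j0 hj0 Pj0] : exists2 j, (j < #|S t0|)%N & P j.
  case: Hex => x xG ux.
  pose x' := upd x t0 a0.
  have x'G : x' \in grid S'.
    have := grid_upd x' (x t0) Ha0; rewrite /x' upd_upd upd_id upd_eq eqxx xG /=.
    by move/esym/andP=> [].
  have xt0 : x t0 \in S t0 by move: xG; rewrite inE => /forallP.
  have : ~ (forall j, (j < #|S t0|)%N -> uk S t0 u j x' = 0).
    move=> Hj; have Hv := vand (v := fun a => u (upd x' t0 a)) Hj.
    have Hc : (#|[set a in S t0 | u (upd x' t0 a) != 0%R]| <= #|S t0|)%N.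
      by apply: subset_leq_card; apply/subsetP => a; rewrite inE => /andP[].
    have := Hv Hc (x t0) xt0; rewrite /x' upd_upd upd_id => H.
    by rewrite H eqxx in ux.
  move=> Hnot.
  have /existsP[j Hj] : [exists j : 'I_#|S t0|, uk S t0 u j x' != 0].
    case: (boolP [exists j : 'I_#|S t0|, uk S t0 u j x' != 0]) => // /existsPn H.
    exfalso; apply: Hnot => j hj; apply/eqP.
    by have := H (Ordinal hj); rewrite negbK.
  exists j => //; apply/existsP; exists x'; by rewrite x'G.
have exP : exists k, P k by exists j0.
case: (ex_minnP exP) => k Pk mink.
have ks : (k < #|S t0|)%N := leq_ltn_trans (mink j0 Pj0) hj0.
have kF : (k < #|F|)%N := leq_trans ks (max_card _).
pose kk : 'I_#|F| := Ordinal kF.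
have Hex' : exists2 x', x' \in grid S' & uk S t0 u k x' != 0.
  by move: Pk => /existsP[x' /andP[h1 h2]]; exists x'.
have [e' [De' ipe' Dpe']] := IH S' Hsum' HS' (uk S t0 u k) Hex'.
have e0 : e' t0 = 0%N :> nat.
  move: De'; rewrite inE => /forallP /(_ t0); rewrite /S' /Sup eqxx cards1.
  by rewrite ltnS leqn0 => /eqP.
exists (upd e' t0 kk); split.
- rewrite inE; apply/forallP => t; case: (t =P t0) => [->|/eqP tt0].
    by rewrite upd_eq.
  rewrite upd_neq //; move: De'; rewrite inE => /forallP /(_ t).
  by rewrite /S' /Sup (negbTE tt0).
- have -> : ip S u (upd e' t0 kk) = ip S' (uk S t0 u k) e'; last by [].
  rewrite /ip (sum_grid _ _ Ha0) exchange_big /=; apply: eq_bigr => x' _.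
  rewrite /uk mulr_suml; apply: eq_bigr => a _.
  by rewrite mono_upd // mulrA.
- have -> : Dperp (upd e' t0 kk) = (k.+1 * Dperp e')%N.
    rewrite /Dperp (bigD1 t0) //= [in RHS](bigD1 t0) //= e0 upd_eq /= addn1 add0n mul1n.
    congr (_ * _)%N; apply: eq_bigr => t tt0; by rewrite upd_neq.
  apply: leq_trans (leq_mul (leqnn _) Dpe') _.
  rewrite !wtE (sum_grid _ _ Ha0) exchange_big big_distrr /=; apply: leq_sum => x' x'G.
  case: eqP => [_|/eqP ne]; first by rewrite muln0.
  rewrite muln1 sum_bool_card ltnNge; apply/negP => Hle.
  have Hj' : forall j, (j < k)%N -> uk S t0 u j x' = 0.
    move=> j jk; apply/eqP; apply/negPn/negP => nz.
    have : P j by apply/existsP; exists x'; rewrite x'G nz.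
    by move/mink; rewrite leqNgt jk.
  have H := vand Hj' Hle.
  move/eqP: ne; apply; rewrite /uk big1 // => a aS; by rewrite H // mul0r.
Qed.

End Dual.


Section Bridge.
Variables (F : finFieldType) (m : nat) (S : 'I_m -> {set F}).
Local Notation pt := {ffun 'I_m -> F}.
Local Notation mon := (monom F m).

Lemma sum_reind (I T : finType) (h : I -> T) (w : I -> F) (G : T -> F) :
  \sum_i w i * G (h i) = \sum_x (\sum_(i | h i == x) w i) * G x.
Proof.
rewrite (partition_big h predT) //; apply: eq_bigr => x _.
rewrite mulr_suml; apply: eq_bigr => i /eqP ->; by [].
Qed.

Lemma sum_inj_at (I T : finType) (h : I -> T) (w : I -> F) k : injective h ->
  \sum_(i | h i == h k) w i = w k.
Proof.
move=> hi; rewrite (big_pred1 k) // => i; rewrite /= (inj_eq hi).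
by [].
Qed.

Definition cL (L : {set mon}) (v : 'rV[F]_#|L|) (e : mon) : F :=
  \sum_(k | enum_val k == e) v 0 k.

Lemma codeM_entry (L : {set mon}) (v : 'rV[F]_#|L|) j :
  (v *m codeM S L) 0 j = ev (cL v) (enum_val j).
Proof.
rewrite mxE /ev /cL -(sum_reind enum_val (fun k => v 0 k) (fun e => mono e (enum_val j))).
apply: eq_bigr => k _; by rewrite !mxE.
Qed.

Lemma cL_supp (L : {set mon}) (v : 'rV[F]_#|L|) e : cL v e != 0 -> e \in L.
Proof.
apply: contraR => eL; rewrite /cL big_pred0 // => k.
by apply/negP => /eqP ek; move: eL; rewrite -ek enum_valP.
Qed.

Lemma cL_enum (L : {set mon}) (v : 'rV[F]_#|L|) k : cL v (enum_val k) = v 0 k.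
Proof. by rewrite /cL sum_inj_at //; exact: enum_val_inj. Qed.

Lemma hwt_wt (u : 'rV[F]_(npts S)) (f : pt -> F) :
  (forall j, u 0 j = f (enum_val j)) -> hwt u = wt S f.
Proof.
move=> uf; rewrite /hwt /wt.
have -> : [set x in grid S | f x != 0] = enum_val @: [set j | u 0 j != 0].
  apply/setP => x; rewrite inE; apply/andP/imsetP => [[xG fx]|[j]].
    exists (enum_rank_in xG x); last by rewrite enum_rankK_in.
    by rewrite inE uf enum_rankK_in.
  by rewrite inE uf => fj ->; rewrite enum_valP.
by rewrite card_imset //; exact: enum_val_inj.
Qed.

Lemma Dw_gt0 e : e \in Delta S -> (0 < Dw S e)%N.
Proof.
rewrite inE => /forallP He; rewrite /Dw prodn_gt0 // => t; by rewrite subn_gt0.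
Qed.

Lemma primal_row (HS : forall t, S t != set0) (L : {set mon}) (v : 'rV[F]_#|L|) :
  L \subset Delta S -> (exists k, v 0 k != 0) ->
  exists2 e, e \in L & (Dw S e <= hwt (v *m codeM S L))%N.
Proof.
move=> LD [k vk].
have H1 : forall e, cL v e != 0 -> e \in Delta S.
  by move=> e /cL_supp eL; apply: (subsetP LD).
have H2 : exists e, cL v e != 0 by exists (enum_val k); rewrite cL_enum.
have [e ce De] := @primal_key F m _ S (leqnn _) HS (cL v) H1 H2.
exists e; first exact: (cL_supp ce).
by rewrite (@hwt_wt _ (ev (cL v))) // => j; rewrite codeM_entry.
Qed.

Lemma rank_codeM (HS : forall t, S t != set0) (L : {set mon}) :
  L \subset Delta S -> \rank (codeM S L) = #|L|.
Proof.
move=> LD; apply/eqP; rewrite eqn_leq rank_leq_row row_leq_rank.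
apply: inj_row_free => v v0; apply/rowP => k; rewrite mxE.
apply/eqP; case: (boolP (v 0 k == 0)) => // vk.
have [e eL] := primal_row HS LD (ex_intro _ k vk).
rewrite v0 /hwt.
have -> : [set j | (0 : 'rV[F]_(npts S)) 0 j != 0] = set0.
  by apply/setP => j; rewrite !inE mxE eqxx.
rewrite cards0 leqn0 => /eqP D0.
by have := Dw_gt0 (subsetP LD _ eL); rewrite D0.
Qed.

End Bridge.


Section Bridge2.
Variables (F : finFieldType) (m : nat) (S : 'I_m -> {set F}).
Local Notation pt := {ffun 'I_m -> F}.
Local Notation mon := (monom F m).

Lemma dual_row (HS : forall t, S t != set0) (L : {set mon}) (u : 'rV[F]_(npts S)) :
  u *m (codeM S L)^T = 0 -> u != 0 ->
  exists e, [/\ e \in Delta S, e \notin L & (Dperp e <= hwt u)%N].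
Proof.
move=> uC u0.
pose f (x : pt) := \sum_(j | enum_val j == x) u 0 j.
have hf j : u 0 j = f (enum_val j) by rewrite /f sum_inj_at //; exact: enum_val_inj.
have [j uj] : exists j, u 0 j != 0.
  case: (boolP [exists j, u 0 j != 0]) => [/existsP//|/existsPn H].
  by case/eqP: u0; apply/rowP => j; rewrite mxE; apply/eqP; have := H j; rewrite negbK.
have Hex : exists2 x, x \in grid S & f x != 0.
  by exists (enum_val j); [exact: enum_valP | rewrite -hf].
have [e [De ipe Dpe]] := @dual_key F m _ S (leqnn _) HS f Hex.
exists e; split => //; last by rewrite (hwt_wt hf).
apply/negP => eL.
move/eqP: ipe; apply.
have := congr1 (fun M : 'M[F]_(1, #|L|) => M 0 (enum_rank_in eL e)) uC; rewrite !mxE => <-.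
rewrite (eq_bigr (fun j => u 0 j * mono e (enum_val j))); last first.
  by move=> i _; rewrite !mxE enum_rankK_in.
rewrite (sum_reind enum_val (fun j => u 0 j) (mono e)) /ip [LHS]big_mkcond /=.
apply: eq_bigr => x _; case: (boolP (x \in grid S)) => xG //.
rewrite /f big_pred0 ?mul0r // => i; apply/negP => /eqP ej.
by move: xG; rewrite -ej enum_valP.
Qed.

End Bridge2.


Lemma Dperp_le (F : finFieldType) (m : nat) (S : 'I_m -> {set F})
  (HS : forall t, S t != set0) (e : monom F m) :
  e \in Delta S -> (Dperp e <= npts S)%N.
Proof.
rewrite inE => /forallP He.
pose eb : monom F m := [ffun t => insubd (zF F) (#|S t| - (e t).+1)%N].
have ebt t : (eb t : nat) = (#|S t| - (e t).+1)%N.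
  rewrite ffunE val_insubd; case: ifP => // /negP[].
  apply: leq_trans (max_card (mem (S t))).
  by rewrite ltn_subrL /= (leq_ltn_trans (leq0n _) (He t)).
have ebD : eb \in Delta S.
  rewrite inE; apply/forallP => t; rewrite ebt ltn_subrL /=.
  by rewrite (leq_ltn_trans (leq0n _) (He t)).
have DwE : Dw S eb = Dperp e.
  rewrite /Dw /Dperp; apply: eq_bigr => t _; rewrite ebt subKn ?addn1 //.
pose c (e' : monom F m) : F := if e' == eb then 1 else 0.
have H1 : forall e', c e' != 0 -> e' \in Delta S.
  by move=> e'; rewrite /c; case: (e' =P eb) => [->|_] //; rewrite eqxx.
have H2 : exists e', c e' != 0 by exists eb; rewrite /c eqxx oner_eq0.
have [e' ce' De'] := @primal_key F m _ S (leqnn _) HS c H1 H2.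
move: ce'; rewrite /c; case: (e' =P eb) => [Ee _|_]; last by rewrite eqxx.
rewrite Ee in De'.
rewrite -DwE; apply: leq_trans De' _; rewrite /wt /npts.
by apply: subset_leq_card; apply/subsetP => x; rewrite inE => /andP[].
Qed.

Lemma row_nz (F : fieldType) n (v : 'rV[F]_n) : v != 0 -> exists k, v 0 k != 0.
Proof.
move=> v0; case: (boolP [exists k, v 0 k != 0]) => [/existsP//|/existsPn H].
by case/eqP: v0; apply/rowP => j; rewrite mxE; apply/eqP; have := H j; rewrite negbK.
Qed.

Lemma hwt_le (F : fieldType) n (u : 'rV[F]_n) : (hwt u <= n)%N.
Proof. by rewrite /hwt; apply: leq_trans (max_card _) _; rewrite card_ord. Qed.

Unset Implicit Arguments.
Theorem mainTheorem2 (F : finFieldType) (m : nat) (S : 'I_m -> {set F})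
  (HS : forall t, S t != set0) (delta deltap : nat)
  (Hd : (0 < delta)%N) (Hdp : (0 < deltap)%N) :
  let L1 := [set e in Delta S | (delta <= Dw S e)%N] in
  let L2 := [set e in Delta S | (Dperp e < deltap)%N] in
  L2 \proper L1 ->
  (codeM S L2 < codeM S L1)%MS /\
  (\rank (codeM S L1) - \rank (codeM S L2) = #|L1| - #|L2|)%N /\
  (delta <= M1 (codeM S L1) (codeM S L2))%N /\
  (deltap <= M1 (dualM (codeM S L2)) (dualM (codeM S L1)))%N.
Proof.
move=> L1 L2 Hprop.
have [sub12 [e1 e1L1 e1nL2]] := properP Hprop.
have L1D : L1 \subset Delta S by apply/subsetP => e; rewrite inE => /andP[].
have L2D : L2 \subset Delta S by apply/subsetP => e; rewrite inE => /andP[].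
have r1 := rank_codeM HS L1D; have r2 := rank_codeM HS L2D.
have le12 : (codeM S L2 <= codeM S L1)%MS.
  apply/row_subP => k; have kL1 : enum_val k \in L1 := subsetP sub12 _ (enum_valP k).
  rewrite /codeM rowK.
  have -> : evalvec S (enum_val k) =
    row (enum_rank_in kL1 (enum_val k)) (\matrix_(i < #|L1|) evalvec S (enum_val i)).
    by rewrite rowK enum_rankK_in.
  exact: row_sub.
split; first by rewrite ltmxErank le12 r1 r2 proper_card.
split; first by rewrite r1 r2.
split.
  rewrite /M1; apply: (big_ind (fun x => delta <= x)%N) => [|x y hx hy|u /andP[uC1 uC2]].
  - pose k1 := enum_rank_in e1L1 e1.
    have Hk : (const_mx 1 : 'rV[F]_#|L1|) 0 k1 != 0 by rewrite mxE oner_eq0.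
    have [e eL De] := primal_row HS L1D (ex_intro _ k1 Hk).
    apply: leq_trans (hwt_le _); apply: leq_trans De.
    by move: eL; rewrite inE => /andP[].
  - by rewrite leq_min hx hy.
  - case/submxP: uC1 => v uv.
    have v0 : v != 0 by apply: contraNneq uC2; rewrite uv => ->; rewrite mul0mx sub0mx.
    have [e eL De] := primal_row HS L1D (row_nz v0).
    rewrite uv; apply: leq_trans De.
    by move: eL; rewrite inE => /andP[].
rewrite /M1; apply: (big_ind (fun x => deltap <= x)%N) => [|x y hx hy|u /andP[uK2 uK1]].
- apply: leq_trans (Dperp_le HS (subsetP L1D _ e1L1)).
  by move: e1nL2; rewrite inE (subsetP L1D _ e1L1) /= -leqNgt.
- by rewrite leq_min hx hy.
- have u0 : u != 0 by apply: contraNneq uK1 => ->; rewrite sub0mx.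
  have [e [eD enL2 De]] := dual_row HS (sub_kermxP uK2) u0.
  apply: leq_trans De.
  by move: enL2; rewrite inE eD /= -leqNgt.
Qed.
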